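(* If $X$ is a closed convex subset of $\mathbb{R}^n$, then $\mathit{HM}_2(X)=0$.
   Context: $X$ carries the Euclidean (subspace) metric. For a metric space $X$, the magnitude homology $\mathit{HM}^\ell_k(X)$ is the degree-$k$ homology of the chain complex whose $k$-chains in grading $\ell$ are the free abelian group on symbols $\langle x_0,\dots,x_k\rangle$ with $x_i\neq x_{i+1}$ and $d(x_0,x_1)+\cdots+d(x_{k-1},x_k)=\ell$, with boundary $\sum_i(-1)^i d^i$, where $d^i$ deletes $x_i$ if $d(x_{i-1},x_i)+d(x_i,x_{i+1})=d(x_{i-1},x_{i+1})$ and is $0$ otherwise (deleting an endpoint always gives $0$); $\mathit{HM}_2(X)=0$ means $\mathit{HM}^\ell_2(X)=0$ for all $\ell$. *)

(* Defs.v *)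
From HB Require Import structures.
From mathcomp Require Import all_boot all_order all_algebra.
From mathcomp Require Import all_classical all_reals all_analysis.
Set Implicit Arguments. Unset Strict Implicit. Unset Printing Implicit Defensive.
Import Order.TTheory GRing.Theory Num.Theory.
Import numFieldTopology.Exports numFieldNormedType.Exports.
Local Open Scope ring_scope.

Section MagnitudeHomology.
Variables (R : realType) (n : nat).
Notation V := 'rV[R]_n.

Definition edist (x y : V) : R := Num.sqrt (\sum_(i < n) (x 0 i - y 0 i) ^+ 2).

Definition convex_subset (X : set V) : Prop :=
  forall x y (t : R), X x -> X y -> 0 <= t -> t <= 1 ->
    X ((1 - t) *: x + t *: y).

Fixpoint tlen (s : seq V) : R :=
  match s with
  | x :: ((y :: _) as s') => edist x y + tlen s'
  | _ => 0
  end.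

Fixpoint consec_distinct (s : seq V) : bool :=
  match s with
  | x :: ((y :: _) as s') => (x != y) && consec_distinct s'
  | _ => true
  end.

Definition mgen (X : set V) (k : nat) (l : R) (s : seq V) : Prop :=
  [/\ size s = k.+1, (forall x, x \in s -> X x), consec_distinct s & tlen s = l].

(* A chain: a formal Z-linear combination, given as a finite list of
   (coefficient, generator) pairs; its coefficient function: *)
Definition chain := seq (int * seq V).
Definition coef (c : chain) (s : seq V) : int :=
  \sum_(p <- c | p.2 == s) p.1.

Definition mchain (X : set V) (k : nat) (l : R) (c : chain) : Prop :=
  forall p, p \in c -> mgen X k l p.2.

(* Face d^i (0 < i < k): delete x_i if x_i lies metrically between its
   neighbours; otherwise the face is 0 (represented by omitting it).
   Endpoint faces are always 0. *)
Definition face_nonzero (s : seq V) (i : nat) : bool :=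
  let x0 := const_mx 0 in
  edist (nth x0 s i.-1) (nth x0 s i) + edist (nth x0 s i) (nth x0 s i.+1)
    == edist (nth x0 s i.-1) (nth x0 s i.+1).

Definition delete_at (s : seq V) (i : nat) : seq V := take i s ++ drop i.+1 s.

Definition bd_gen (a : int) (s : seq V) : chain :=
  [seq (((-1) ^+ i) * a, delete_at s i) |
     i <- iota 1 (size s).-2 & face_nonzero s i].

Definition bd (c : chain) : chain := flatten [seq bd_gen p.1 p.2 | p <- c].

(* HM^l_k(X) = 0 : every k-cycle in grading l is a boundary of a (k+1)-chain
   in grading l (equality of chains = equality of coefficient functions). *)
Definition HM_vanishes (X : set V) (k : nat) (l : R) : Prop :=
  forall c : chain, mchain X k l c -> (forall s, coef (bd c) s = 0) ->
    exists b : chain, mchain X k.+1 l b /\ (forall s, coef (bd b) s = coef c s).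

End MagnitudeHomology.

(* Main.v *)
Require Import Defs.
From HB Require Import structures.
From mathcomp Require Import all_boot all_order all_algebra.
From mathcomp Require Import all_classical all_reals all_analysis.
From mathcomp Require Import ring lra.
Import Order.TTheory GRing.Theory Num.Theory.
Import numFieldTopology.Exports numFieldNormedType.Exports.
Local Open Scope ring_scope.
Local Notation edist := Defs.edist.
Set Implicit Arguments. Unset Strict Implicit.

Definition Nrm (R : realType) (n : nat) (w : 'I_n -> R) : R :=
  Num.sqrt (\sum_(i < n) w i ^+ 2).

Arguments Nrm {R n}.

Lemma sum_expand (R : realType) (n : nat) (f g : 'I_n -> R) (a b : R) :
  \sum_(i < n) (a * f i + b * g i) ^+ 2 =
  a ^+ 2 * \sum_(i < n) f i ^+ 2 + 2 * a * b * \sum_(i < n) (f i * g i)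
  + b ^+ 2 * \sum_(i < n) g i ^+ 2.
Proof.
rewrite (eq_bigr (fun i => a ^+ 2 * f i ^+ 2 + 2 * a * b * (f i * g i)
  + b ^+ 2 * g i ^+ 2)); last by move=> i _; ring.
by rewrite !big_split /= -!mulr_sumr.
Qed.

Lemma edist_sym (R : realType) (n : nat) (x y : 'rV[R]_n) :
  edist x y = edist y x.
Proof.
rewrite /edist; congr Num.sqrt; apply: eq_bigr => i _.
by rewrite -sqrrN opprB.
Qed.

Lemma edist_ge0 (R : realType) (n : nat) (x y : 'rV[R]_n) : 0 <= edist x y.
Proof. exact: sqrtr_ge0. Qed.

Lemma edist_lin (R : realType) (n : nat) (x y : 'rV[R]_n) (c : R)
  (w : 'I_n -> R) : 0 <= c -> (forall i, x 0 i - y 0 i = c * w i) ->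
  edist x y = c * Nrm w.
Proof.
move=> c0 H; rewrite /edist (eq_bigr (fun i => c ^+ 2 * w i ^+ 2)); last first.
  by move=> i _; rewrite H exprMn.
by rewrite -mulr_sumr sqrtrM ?sqr_ge0 // sqrtr_sqr ger0_norm.
Qed.

Lemma edist_linN (R : realType) (n : nat) (x y : 'rV[R]_n) (c : R)
  (w : 'I_n -> R) : 0 <= c -> (forall i, y 0 i - x 0 i = c * w i) ->
  edist x y = c * Nrm w.
Proof. by move=> c0 H; rewrite edist_sym; apply: edist_lin. Qed.

Lemma edist_eq0 (R : realType) (n : nat) (x y : 'rV[R]_n) :
  edist x y = 0 -> x = y.
Proof.
move/eqP; rewrite sqrtr_eq0 => H.
have H0 : \sum_(i < n) (x 0 i - y 0 i) ^+ 2 == 0.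
  by rewrite eq_le H /=; apply: sumr_ge0 => i _; exact: sqr_ge0.
move: H0; rewrite psumr_eq0; last by move=> i _; exact: sqr_ge0.
move/allP => A; apply/rowP => j.
by have := A j (mem_index_enum _); rewrite /= sqrf_eq0 subr_eq0 => /eqP.
Qed.
Lemma eqcase (R : realType) (n : nat) (a b c : 'rV[R]_n) :
  edist a b + edist b c = edist a c ->
  exists t, [/\ 0 <= t, t <= 1 & forall i, b 0 i = a 0 i + t * (c 0 i - a 0 i)].
Proof.
move=> H.
pose u := fun i => b 0 i - a 0 i; pose v := fun i => c 0 i - b 0 i.
have Eab : edist a b = Nrm u.
  by rewrite (@edist_linN _ _ _ _ 1 u) ?mul1r // => i; rewrite mul1r.
have Ebc : edist b c = Nrm v.
  by rewrite (@edist_linN _ _ _ _ 1 v) ?mul1r // => i; rewrite mul1r.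
have Eac : edist a c = Num.sqrt (\sum_(i < n) (1 * u i + 1 * v i) ^+ 2).
  by rewrite /edist; congr Num.sqrt; apply: eq_bigr => i _; rewrite /u /v; ring.
set Su := \sum_(i < n) u i ^+ 2.
set Sv := \sum_(i < n) v i ^+ 2.
set Suv := \sum_(i < n) (u i * v i).
have Su0 : 0 <= Su by apply: sumr_ge0 => i _; exact: sqr_ge0.
have Sv0 : 0 <= Sv by apply: sumr_ge0 => i _; exact: sqr_ge0.
have S0 : 0 <= \sum_(i < n) (1 * u i + 1 * v i) ^+ 2.
  by apply: sumr_ge0 => i _; exact: sqr_ge0.
set p := Nrm u. set q := Nrm v.
have p0 : 0 <= p by exact: sqrtr_ge0.
have q0 : 0 <= q by exact: sqrtr_ge0.
have p2 : p ^+ 2 = Su by rewrite /p /Nrm sqr_sqrtr.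
have q2 : q ^+ 2 = Sv by rewrite /q /Nrm sqr_sqrtr.
rewrite Eab Ebc Eac in H.
have H2 : (p + q) ^+ 2 = Su + 2 * Suv + Sv.
  by rewrite H sqr_sqrtr // sum_expand /Su /Sv /Suv; ring.
have pq : p * q = Suv.
  have : p ^+ 2 + 2 * (p * q) + q ^+ 2 = Su + 2 * Suv + Sv by rewrite -H2; ring.
  rewrite p2 q2 => E.
  have : 2 * (p * q) = 2 * Suv by apply: (addrI Su); apply: (addIr Sv).
  by move/(mulfI (x := 2)); apply; rewrite pnatr_eq0.
have Z : \sum_(i < n) (q * u i + (- p) * v i) ^+ 2 == 0.
  by rewrite sum_expand -/Su -/Sv -/Suv -p2 -q2 -pq; apply/eqP; ring.
move: Z; rewrite psumr_eq0; last by move=> i _; exact: sqr_ge0.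
move/allP => Z.
have key : forall i, q * u i = p * v i.
  move=> i; have := Z i (mem_index_enum _); rewrite /= sqrf_eq0 => /eqP.
  by move=> E; apply/eqP; rewrite -subr_eq0; apply/eqP; rewrite -E; ring.
have [D0|Dn0] := eqVneq (p + q) 0.
  have pz : p = 0 by lra.
  have : Su == 0 by rewrite -p2 pz expr0n.
  rewrite psumr_eq0; last by move=> i _; exact: sqr_ge0.
  move/allP => Zu; exists 0; split => // i.
  have := Zu i (mem_index_enum _); rewrite /= sqrf_eq0 /u subr_eq0 => /eqP ->.
  by ring.
have Dp : 0 < p + q by rewrite lt_def Dn0 /=; lra.
exists (p / (p + q)); split.
- by apply: divr_ge0 => //; lra.
- by rewrite ler_pdivrMr // mul1r; lra.
- move=> i.
  have E1 : (p + q) * u i = p * (u i + v i) by rewrite mulrDl key; ring.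
  have E2 : u i = p / (p + q) * (u i + v i).
    by rewrite mulrAC -E1 mulrAC mulfV // mul1r.
  have : c 0 i - a 0 i = u i + v i by rewrite /u /v; ring.
  move=> ->; rewrite -E2 /u; ring.
Qed.
Lemma edist_abs (R : realType) (n : nat) (x y : 'rV[R]_n) (c : R)
  (w : 'I_n -> R) : (forall i, x 0 i - y 0 i = c * w i) ->
  edist x y = `|c| * Nrm w.
Proof.
move=> H; have [c0|c0] := leP 0 c.
  by rewrite (ger0_norm c0); apply: edist_lin.
rewrite (ltr0_norm c0); apply: edist_linN; first lra.
by move=> i; rewrite -opprB H; ring.
Qed.

Lemma edist_line (R : realType) (n : nat) (x y p : 'rV[R]_n) (s s' : R)
  (w : 'I_n -> R) : (forall i, x 0 i = p 0 i + s * w i) ->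
  (forall i, y 0 i = p 0 i + s' * w i) ->
  edist x y = `|s - s'| * Nrm w.
Proof. by move=> Hx Hy; apply: edist_abs => i; rewrite Hx Hy; ring. Qed.

Lemma edistxx (R : realType) (n : nat) (x : 'rV[R]_n) : edist x x = 0.
Proof. by rewrite /edist big1 ?sqrtr0 // => i _; rewrite subrr expr0n. Qed.

Lemma Nrm_ge0 (R : realType) (n : nat) (w : 'I_n -> R) : 0 <= Nrm w.
Proof. exact: sqrtr_ge0. Qed.

Definition mid (R : realType) (n : nat) (x y : 'rV[R]_n) : 'rV[R]_n :=
  (1 - 2^-1) *: x + 2^-1 *: y.
Arguments mid {R n}.

Lemma midE (R : realType) (n : nat) (x y : 'rV[R]_n) i :
  mid x y 0 i = x 0 i + 2^-1 * (y 0 i - x 0 i).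
Proof. rewrite /mid !mxE; ring. Qed.

Lemma test (R : realType) (t : R) : t < 2^-1 -> 0 < 2^-1 - t /\ 2^-1 + 2^-1 = 1 :> R.
Proof. move=> h. split. lra. lra. Qed.
Lemma absL (R : realType) (a b : R) : a <= b -> `|a - b| = b - a.
Proof. by move=> h; rewrite ler0_norm ?opprB //; lra. Qed.
Lemma absR (R : realType) (a b : R) : b <= a -> `|a - b| = a - b.
Proof. by move=> h; rewrite ger0_norm //; lra. Qed.

Lemma neq_of_edist (R : realType) (n : nat) (x y : 'rV[R]_n) :
  edist x y != 0 -> x != y.
Proof. by apply: contra => /eqP ->; rewrite edistxx. Qed.

Lemma Nrm_gt0 (R : realType) (n : nat) (x y : 'rV[R]_n) (c : R) (w : 'I_n -> R) :
  x != y -> edist x y = c * Nrm w -> 0 < Nrm w.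
Proof.
move=> xy E; rewrite lt_def Nrm_ge0 andbT; apply/eqP => N0.
by move: xy; rewrite (edist_eq0 (_ : edist x y = 0)) ?eqxx // E N0 mulr0.
Qed.

Lemma ns_geo (R : realType) (n : nat) (x0 x1 x2 : 'rV[R]_n) :
  x1 != x2 -> ~~ (edist x0 x1 + edist x1 x2 == edist x0 x2) ->
  [/\ ~~ (edist x0 x1 + edist x1 (mid x1 x2) == edist x0 (mid x1 x2)),
      edist x1 (mid x1 x2) + edist (mid x1 x2) x2 == edist x1 x2,
      x1 != mid x1 x2, mid x1 x2 != x2 &
      edist x1 (mid x1 x2) + edist (mid x1 x2) x2 = edist x1 x2].
Proof.
move=> x12 hns; set m := mid x1 x2.
pose w := fun i => x2 0 i - x1 0 i.
have L1 : forall i, x1 0 i = x1 0 i + 0 * w i by move=> i; ring.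
have Lm : forall i, m 0 i = x1 0 i + 2^-1 * w i by move=> i; rewrite midE.
have L2 : forall i, x2 0 i = x1 0 i + 1 * w i by move=> i; rewrite /w; ring.
have d1m : edist x1 m = 2^-1 * Nrm w by rewrite (edist_line L1 Lm) absL; [ring| lra].
have dm2 : edist m x2 = 2^-1 * Nrm w by rewrite (edist_line Lm L2) absL; lra.
have d12 : edist x1 x2 = 1 * Nrm w by rewrite (edist_line L1 L2) absL; [ring| lra].
have Np := Nrm_gt0 x12 d12.
split.
- apply/negP => /eqP H; move: hns; apply/negP/negPn.
  have [t [t0 t1 Ht]] := eqcase H.
  pose v := fun i => m 0 i - x0 0 i.
  have P0 : forall i, x0 0 i = x0 0 i + 0 * v i by move=> i; ring.
  have P1 : forall i, x1 0 i = x0 0 i + t * v i by [].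
  have P2 : forall i, x2 0 i = x0 0 i + (2 - t) * v i.
    move=> i; have := Lm i; rewrite /v Ht /w => E.
    have -> : x2 0 i = 2 * m 0 i - x1 0 i by rewrite E Ht; field.
    by rewrite Ht; ring.
  rewrite (edist_line P0 P1) (edist_line P1 P2) (edist_line P0 P2).
  by rewrite absL ?absL ?absL; try lra; apply/eqP; ring.
- by rewrite d1m dm2 d12; apply/eqP; lra.
- by apply: neq_of_edist; rewrite d1m; apply/eqP => E; lra.
- by apply: neq_of_edist; rewrite dm2; apply/eqP => E; lra.
- by rewrite d1m dm2 d12; lra.
Qed.
Lemma sm_geo (R : realType) (n : nat) (x0 x1 x2 : 'rV[R]_n) :
  x0 != x1 -> edist x0 x1 + edist x1 x2 = edist x0 x2 -> x1 != mid x0 x2 ->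
  if edist x0 x1 + edist x1 (mid x0 x2) == edist x0 (mid x0 x2) then
   [/\ edist x1 (mid x0 x2) + edist (mid x0 x2) x2 == edist x1 x2,
       mid x0 x2 != x2 &
       edist x1 (mid x0 x2) + edist (mid x0 x2) x2 = edist x1 x2]
  else
   [/\ edist x0 (mid x0 x2) + edist (mid x0 x2) x1 == edist x0 x1,
       edist (mid x0 x2) x1 + edist x1 x2 == edist (mid x0 x2) x2,
       x0 != mid x0 x2 &
       edist x0 (mid x0 x2) + edist (mid x0 x2) x1 = edist x0 x1].
Proof.
move=> x01 H x1m; set m := mid x0 x2.
have [t [t0 t1 Ht]] := eqcase H.
pose w := fun i => x2 0 i - x0 0 i.
have P0 : forall i, x0 0 i = x0 0 i + 0 * w i by move=> i; ring.
have P1 : forall i, x1 0 i = x0 0 i + t * w i by [].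
have Pm : forall i, m 0 i = x0 0 i + 2^-1 * w i by move=> i; rewrite midE.
have P2 : forall i, x2 0 i = x0 0 i + 1 * w i by move=> i; rewrite /w; ring.
have d01 : edist x0 x1 = t * Nrm w by rewrite (edist_line P0 P1) absL; [ring|lra].
have Np := Nrm_gt0 x01 d01.
have d0m : edist x0 m = 2^-1 * Nrm w by rewrite (edist_line P0 Pm) absL; [ring|lra].
have dm2 : edist m x2 = 2^-1 * Nrm w by rewrite (edist_line Pm P2) absL; lra.
have d12 : edist x1 x2 = (1 - t) * Nrm w by rewrite (edist_line P1 P2) absL; [ring|lra].
have th : t != 2^-1.
  apply: contra x1m => /eqP tE; apply/eqP/rowP => i; by rewrite P1 Pm tE.
have [tl|tg] := ltP t 2^-1.
  have d1m : edist x1 m = (2^-1 - t) * Nrm w by rewrite (edist_line P1 Pm) absL; lra.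
  rewrite ifT; last by rewrite d01 d1m d0m; apply/eqP; ring.
  split.
  - by rewrite d1m dm2 d12; apply/eqP; lra.
  - by apply: neq_of_edist; rewrite dm2; apply/eqP => E; lra.
  - by rewrite d1m dm2 d12; lra.
have tg' : 2^-1 < t by rewrite lt_def tg andbT; apply: contra th => /eqP ->.
have d1m : edist x1 m = (t - 2^-1) * Nrm w by rewrite (edist_line P1 Pm) absR; lra.
have dm1 : edist m x1 = (t - 2^-1) * Nrm w by rewrite edist_sym.
rewrite ifF; last first.
  apply/negbTE/eqP; rewrite d01 d1m d0m => E; nra.
split.
- by rewrite d0m dm1 d01; apply/eqP; ring.
- by rewrite dm1 d12 dm2; apply/eqP; lra.
- by apply: neq_of_edist; rewrite d0m; apply/eqP => E; lra.
- by rewrite d0m dm1 d01; ring.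
Qed.
Definition hgen (R : realType) (n : nat) (p : int * seq 'rV[R]_n) : chain R n :=
  match p.2 with
  | [:: x0; x1; x2] =>
    if face_nonzero p.2 1 then
      if x1 == mid x0 x2 then [::]
      else if face_nonzero [:: x0; x1; mid x0 x2] 1 then
        [:: (p.1, [:: x0; x1; mid x0 x2; x2])]
      else [:: (- p.1, [:: x0; mid x0 x2; x1; x2])]
    else [:: (p.1, [:: x0; x1; mid x1 x2; x2])]
  | _ => [::]
  end.

Definition phi (R : realType) (n : nat) (t : seq 'rV[R]_n) : seq 'rV[R]_n :=
  match t with [:: a; b] => [:: a; mid a b; b] | _ => t end.

Definition phic (R : realType) (n : nat) (d : chain R n) : chain R n :=
  map (fun q => (q.1, phi q.2)) d.

Lemma coef_nil (R : realType) (n : nat) s : coef (R:=R) (n:=n) [::] s = 0.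
Proof. by rewrite /coef big_nil. Qed.

Lemma coef_cons (R : realType) (n : nat) (p : int * seq 'rV[R]_n) c s :
  coef (p :: c) s = (if p.2 == s then p.1 else 0) + coef c s.
Proof. by rewrite /coef big_cons; case: ifP => _ //; rewrite add0r. Qed.

Lemma coef_cat (R : realType) (n : nat) (c1 c2 : chain R n) s :
  coef (c1 ++ c2) s = coef c1 s + coef c2 s.
Proof. by rewrite /coef big_cat. Qed.

Lemma bd_cat (R : realType) (n : nat) (c1 c2 : chain R n) :
  bd (c1 ++ c2) = bd c1 ++ bd c2.
Proof. by rewrite /bd map_cat flatten_cat. Qed.

Lemma phic_cat (R : realType) (n : nat) (c1 c2 : chain R n) :
  phic (c1 ++ c2) = phic c1 ++ phic c2.
Proof. by rewrite /phic map_cat. Qed.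

Lemma bd_gen_size (R : realType) (n : nat) k (s : seq 'rV[R]_n) q :
  size s = 3 -> q \in bd_gen k s -> size q.2 = 2.
Proof.
case: s => [|x0 [|x1 [|x2 [|]]]] //= _.
by rewrite /bd_gen /=; case: ifP => _; rewrite ?inE // => /eqP ->.
Qed.

Lemma phic_coef (R : realType) (n : nat) (d : chain R n) s :
  (forall q, q \in d -> size q.2 = 2) ->
  coef (phic d) s =
  if s is [:: a; m; b] then (if m == mid a b then coef d [:: a; b] else 0)
  else 0.
Proof.
elim: d => [|q d IH] H.
  by rewrite /phic /= coef_nil; case: s => [|? [|? [|? [|]]]] //; case: ifP; rewrite ?coef_nil.
rewrite /phic map_cons -/(phic d) coef_cons IH; last by move=> q' q'd; apply: H; rewrite inE q'd orbT.
have := H q (mem_head _ _); clear H IH; case: q => k [|a0 [|b0 [|]]] //= _.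
case: s => [|a [|m [|b [|? ?]]]] /=; rewrite ?add0r //;
  try by (rewrite ifF ?addr0 //; apply/negbTE; apply/eqP => /(congr1 size)).
rewrite coef_cons /= !eqseq_cons !andbT.
case: (eqVneq m (mid a b)) => [->|mn] /=.
  case: (eqVneq a0 a) => [->|] /=; last by [].
  case: (eqVneq b0 b) => [->|] /=; first by rewrite !eqxx.
  by rewrite !andbF.
case: (eqVneq a0 a) => [->|] /=; last by rewrite add0r.
case: (eqVneq b0 b) => [->|] /=; last by rewrite andbF add0r.
by rewrite eq_sym (negbTE mn) /= add0r.
Qed.
Lemma inX4 (R : realType) (n : nat) (X : set 'rV[R]_n) a b c d :
  X a -> X b -> X c -> X d -> forall x, x \in [:: a; b; c; d] -> X x.
Proof. by move=> ? ? ? ? x; rewrite !inE => /or4P [] /eqP ->. Qed.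

Lemma midX (R : realType) (n : nat) (X : set 'rV[R]_n) a b :
  convex_subset X -> X a -> X b -> X (mid a b).
Proof. by move=> cvx Xa Xb; apply: cvx => //; lra. Qed.

Lemma F3 (R : realType) (n : nat) (a b c : 'rV[R]_n) :
  face_nonzero [:: a; b; c] 1 = (edist a b + edist b c == edist a c).
Proof. by []. Qed.
Lemma F41 (R : realType) (n : nat) (a b c d : 'rV[R]_n) :
  face_nonzero [:: a; b; c; d] 1 = (edist a b + edist b c == edist a c).
Proof. by []. Qed.
Lemma F42 (R : realType) (n : nat) (a b c d : 'rV[R]_n) :
  face_nonzero [:: a; b; c; d] 2 = (edist b c + edist c d == edist b d).
Proof. by []. Qed.

Lemma bd_gen4 (R : realType) (n : nat) k (a b c d : 'rV[R]_n) :
  bd_gen k [:: a; b; c; d] =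
  (if edist a b + edist b c == edist a c then [:: (- k, [:: a; c; d])] else [::])
  ++ (if edist b c + edist c d == edist b d then [:: (k, [:: a; b; d])] else [::]).
Proof.
rewrite /bd_gen /= ?F41 ?F42.
by case: ifP => _; case: ifP => _ //=; rewrite /delete_at /= ?expr1 ?mulN1r ?sqrrN1 ?mul1r.
Qed.

Lemma bd_gen3 (R : realType) (n : nat) k (a b c : 'rV[R]_n) :
  bd_gen k [:: a; b; c] =
  (if edist a b + edist b c == edist a c then [:: (- k, [:: a; c])] else [::]).
Proof. by rewrite /bd_gen /= ?F3; case: ifP => _ //=; rewrite /delete_at /= expr1 mulN1r. Qed.

Lemma gen_ok (R : realType) (n : nat) (X : set 'rV[R]_n) (l : R) p :
  convex_subset X -> mgen X 2 l p.2 ->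
  mchain X 3 l (hgen p) /\
  forall s, coef (bd (hgen p)) s = coef [:: p] s + coef (phic (bd_gen p.1 p.2)) s.
Proof.
move=> cvx; case: p => k s [] /=.
case: s => [|x0 [|x1 [|x2 [|]]]] //= _ inX /andP [x01 /andP [x12 _]] tl.
have X0 : X x0 by apply: inX; rewrite !inE eqxx.
have X1 : X x1 by apply: inX; rewrite !inE eqxx ?orbT.
have X2 : X x2 by apply: inX; rewrite !inE eqxx ?orbT.
rewrite /hgen /= bd_gen3.
rewrite !F3.
case: (boolP (edist x0 x1 + edist x1 x2 == edist x0 x2)) => F; last first.
  have [A B C D E] := ns_geo (x0:=x0) x12 F.
  split.
    move=> p; rewrite inE => /eqP -> /=; split => //.
    - exact: inX4 X0 X1 (midX cvx X1 X2) X2.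
    - by rewrite /= x01 C D.
    - by rewrite /= -tl -E; ring.
  move=> s; rewrite /bd /= bd_gen4 (negbTE A) B /=.
  by rewrite coef_nil addr0.
have Fe := eqP F.
case: (eqVneq x1 (mid x0 x2)) => [E1|x1m].
  split; first by move=> p; rewrite in_nil.
  move=> s; rewrite /bd /= coef_nil /phic /= !coef_cons !coef_nil /= -E1.
  by case: ifP => _; ring.
move: (sm_geo x01 Fe x1m) => /=.
have Xm := midX cvx X0 X2.
case: ifP => H G.
  have [B C D] := G; split.
    move=> p; rewrite inE => /eqP -> /=; split => //.
    - exact: inX4 X0 X1 Xm X2.
    - by rewrite /= x01 x1m C.
    - by rewrite /= -tl -D; ring.
  move=> s; rewrite /bd /= bd_gen4 H B /phic /= !coef_cons !coef_nil /=.
  by case: ifP => _; case: ifP => _; ring.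
have [A B C D] := G; split.
  move=> p; rewrite inE => /eqP -> /=; split => //.
  - exact: inX4 X0 Xm X1 X2.
  - by rewrite /= C eq_sym x1m x12.
  - by rewrite /= -tl -D; ring.
move=> s; rewrite /bd /= bd_gen4 A B /phic /= !coef_cons !coef_nil /= opprK.
by case: ifP => _; case: ifP => _; ring.
Qed.

Lemma bd_flat (R : realType) (n : nat) (X : set 'rV[R]_n) (l : R) (c : chain R n) s :
  convex_subset X -> (forall q, q \in c -> mgen X 2 l q.2) ->
  coef (bd (flatten (map (@hgen R n) c))) s = coef c s + coef (phic (bd c)) s.
Proof.
move=> cvx; elim: c => [|q c IH] H.
  by rewrite /= /bd /phic /= /coef !big_nil addr0.
have Hq := (gen_ok cvx (H q (mem_head _ _))).2.
rewrite map_cons /= bd_cat coef_cat Hq IH; last by move=> q' q'c; apply: H; rewrite inE q'c orbT.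
have -> : bd (q :: c) = bd_gen q.1 q.2 ++ bd c by [].
rewrite phic_cat coef_cat (coef_cons q c) !coef_cons coef_nil; ring.
Qed.

Unset Implicit Arguments.

Theorem corollary7p23 (R : realType) (n : nat) (X : set 'rV[R]_n) :
  closed X -> convex_subset X -> forall l : R, HM_vanishes X 2 l.
Proof.
move=> _ cvx l c hc hcyc.
exists (flatten (map (@hgen R n) c)); split.
  move=> p /flattenP [b' /mapP [q qc ->] pin].
  exact: (gen_ok cvx (hc q qc)).1 p pin.
move=> s; rewrite (bd_flat _ cvx hc) phic_coef.
  by case: s => [|a [|m [|b [|? ?]]]] //; rewrite ?addr0 // hcyc; case: ifP; rewrite addr0.
move=> q /flattenP [b' /mapP [p pc ->]].
apply: bd_gen_size; by case: (hc p pc).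
Qed.
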